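(* Let $n\ge3$. Let $\mathcal M=(G,\{1\},\{1\},\emptyset)$ be a strongly connected linear compartmental model with $n-1$ compartments, input and output in compartment $1$, and no leaks. Let $H$ be obtained from $G$ by adding a leaf edge at compartment $1$ (new compartment $n$, edges $1\to n$ with parameter $a_{n1}$ and $n\to1$ with parameter $a_{1n}$), and let $\mathcal M'=(H,\{n\},\{1\},\emptyset)$. Let $A$ and $A'$ be the compartmental matrices of $\mathcal M$ and $\mathcal M'$. Define $c_0,\dots,c_{n-1}$ and $d_0,\dots,d_{n-2}$ by $\det(\lambda I-A)=\sum_{i=0}^{n-1}c_i\lambda^i$ and $\det((\lambda I-A)^{1,1})=\sum_{i=0}^{n-2}d_i\lambda^i$ (so $c_{n-1}=d_{n-2}=1$), and define $c^*_0,\dots,c^*_{n-1}$ and $d^*_0,\dots,d^*_{n-2}$ by $\det(\lambda I-A')=\lambda^n+\sum_{i=0}^{n-1}c^*_i\lambda^i$ and $\det((\lambda I-A')^{n,1})=\sum_{i=0}^{n-2}d^*_i\lambda^i$. Then: (1) (i) $d^*_i=(-1)^{n-1}a_{1n}d_i$ for $i=0,\dots,n-2$; (ii) $c^*_i=c_{i-1}+a_{1n}c_i+a_{n1}d_{i-1}$ for $i=1,\dots,n-1$; (iii) $c^*_0=c_0=0$. (2) If $c_{\mathcal M}$ and $c_{\mathcal M'}$ denote the coefficient maps of $\mathcal M$ and $\mathcal M'$, then the rank of the Jacobian matrix of $c_{\mathcal M'}$ at a generic point equals $2$ plus the rank of the Jacobian matrix of $c_{\mathcal M}$ at a generic point.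
   Context: A linear compartmental model $\mathcal M=(G,In,Out,Leak)$ consists of a finite directed graph $G=(V_G,E_G)$ without multi-edges, compartments $V_G=\{1,\dots,n\}$, and subsets $In,Out,Leak\subseteq V_G$; edge $j\to i$ carries parameter $a_{ij}$ and each $i\in Leak$ carries $a_{0i}$. The compartmental matrix $A$ has $A_{ii}=-\sum_{k:\,i\to k\in E_G}a_{ki}$ (minus $a_{0i}$ if $i\in Leak$), $A_{ij}=a_{ij}$ if $j\to i\in E_G$, $0$ otherwise. $B^{i,j}$ denotes $B$ with row $i$ and column $j$ removed. The input-output equations are $\det(\partial I-A)y_i=\sum_{j\in In}(-1)^{i+j}\det((\partial I-A)^{j,i})u_j$ ($i\in Out$), $\partial I$ the diagonal matrix of $d/dt$'s; the coefficient map sends the parameter vector in $\mathbb R^{|E_G|+|Leak|}$ to the vector of all non-constant coefficients (polynomials in the parameters) of these equations. Adding a leaf edge at $i$ to a graph with vertex set $\{1,\dots,n-1\}$ gives the graph with vertex set $\{1,\dots,n\}$ and edge set $E_G\cup\{i\to n,n\to i\}$. *)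

(* Defs.v *)
From HB Require Import structures.
From mathcomp Require Import all_boot all_order all_algebra.
From mathcomp Require Import mpoly.
Set Implicit Arguments. Unset Strict Implicit. Unset Printing Implicit Defensive.
Import GRing.Theory.
Local Open Scope ring_scope.

(* A directed graph on the compartments 'I_k (compartment i+1 of the paper
   is the ordinal i) is a relation E : rel 'I_k; E u v means u -> v is an edge. *)

(* Compartmental matrix of a leak-free model with graph E and parameter
   assignment a, where a i j is the parameter a_{ij} of the edge j -> i.
   (Values of a on non-edges are ignored.) *)
Definition comp_mx (T : comNzRingType) (k : nat) (E : rel 'I_k)
    (a : 'I_k -> 'I_k -> T) : 'M[T]_k :=
  \matrix_(i, j) (if i == j then - \sum_(l < k | E i l) a l i
                  else if E j i then a i j else 0).

(* Adding a leaf edge at i : the new compartment is ord_max, the old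
   compartment u is lift ord_max u (same numerical value). *)
Definition add_leaf (k : nat) (E : rel 'I_k) (i : 'I_k) : rel 'I_k.+1 :=
  fun u v =>
    match unlift ord_max u, unlift ord_max v with
    | Some u', Some v' => E u' v'
    | Some u', None => u' == i
    | None, Some v' => v' == i
    | None, None => false
    end.

(* Edge set, number of parameters (no leaks), and the parameter a_{ij} of the
   edge j -> i as a variable of the polynomial ring {mpoly R[npar E]};
   the variables of this ring are in bijection with the edges via enum_val. *)
Definition edges (k : nat) (E : rel 'I_k) : {set 'I_k * 'I_k} :=
  [set ij | E ij.1 ij.2].
Definition npar (k : nat) (E : rel 'I_k) : nat := #|edges E|.
Definition par (R : comNzRingType) (k : nat) (E : rel 'I_k) (i j : 'I_k)
  : {mpoly R[npar E]} :=
  \sum_(e < npar E | enum_val e == (j, i)) 'X_e.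

Definition pcoefs (T : nzRingType) (p : {poly T}) : seq T :=
  [seq p`_d | d <- iota 0 (size p)].

Definition mconstant (R : comNzRingType) (N : nat) (p : {mpoly R[N]}) : bool :=
  p == (p@_0%MM)%:MP.

(* All non-constant coefficients of the input-output equations
   det(dI - A) y_i = sum_{j in In} (-1)^(i+j) det((dI - A)^{j,i}) u_j, i in Out,
   of the leak-free model (E, In, Out, emptyset), as polynomials in the
   parameters. *)
Definition io_coefs (R : comNzRingType) (k : nat) (E : rel 'I_k)
    (In Out : {set 'I_k}) : seq {mpoly R[npar E]} :=
  let M := char_poly_mx (comp_mx E (@par R k E)) in
  [seq p <- flatten
      [seq pcoefs (\det M) ++
           flatten [seq pcoefs ((-1) ^+ (i + j) * \det (row' j (col' i M)))
                   | j : 'I_k <- enum In]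
      | i : 'I_k <- enum Out]
  | ~~ mconstant p].

Definition jacobian (R : realFieldType) (k : nat) (E : rel 'I_k)
    (In Out : {set 'I_k}) (x : 'I_(npar E) -> R)
  : 'M[R]_(size (io_coefs R E In Out), npar E) :=
  \matrix_(r, e) (mderiv e (io_coefs R E In Out)`_r).@[x].

(* r is the rank of the Jacobian of the coefficient map at a generic point,
   i.e. the maximal rank over all parameter points (attained on a dense
   Zariski-open set). *)
Definition generic_jac_rank (R : realFieldType) (k : nat) (E : rel 'I_k)
    (In Out : {set 'I_k}) (r : nat) : Prop :=
  (exists x, \rank (@jacobian R k E In Out x) = r) /\
  (forall x, (\rank (@jacobian R k E In Out x) <= r)%N).

(* Main.v *)
Require Import Defs.
From HB Require Import structures.
From mathcomp Require Import all_boot all_order all_algebra.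
From mathcomp Require Import mpoly.
From mathcomp Require Import ring.
From mathcomp Require Import zify.
From Stdlib Require Import Classical.
Import GRing.Theory Num.Theory.
Local Open Scope ring_scope.

Lemma val_lift_max (k : nat) (j : 'I_k) : val (lift ord_max j) = val j.
Proof. exact: lift_max. Qed.

Lemma lift_max0 (k : nat) : lift ord_max (ord0 : 'I_k.+1) = ord0.
Proof. by apply/val_inj; rewrite val_lift_max. Qed.

Section Leaf.
Variable (k : nat) (E : rel 'I_k.+1).
Let E' := add_leaf E ord0.

Lemma addleaf_ll u v : E' (lift ord_max u) (lift ord_max v) = E u v.
Proof. by rewrite /E' /add_leaf !liftK. Qed.
Lemma addleaf_lm u : E' (lift ord_max u) ord_max = (u == ord0).
Proof. by rewrite /E' /add_leaf liftK unlift_none. Qed.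
Lemma addleaf_ml v : E' ord_max (lift ord_max v) = (v == ord0).
Proof. by rewrite /E' /add_leaf liftK unlift_none. Qed.
Lemma addleaf_mm : E' ord_max ord_max = false.
Proof. by rewrite /E' /add_leaf unlift_none. Qed.
End Leaf.

Lemma comp_mx_colsum (T : comNzRingType) (k : nat) (E : rel 'I_k)
   (E_irr : irreflexive E) (a : 'I_k -> 'I_k -> T) j :
  \sum_i comp_mx E a i j = 0.
Proof.
pose F i := if E j i then a i j else 0.
have -> : \sum_i comp_mx E a i j =
   \sum_i ((i == j)%:R * (- \sum_(l < k | E j l) a l j) + F i).
  apply: eq_bigr => i _; rewrite mxE /F; case: eqP => [->|_].
    by rewrite E_irr mul1r addr0.
  by rewrite mul0r add0r.
rewrite big_split /=.
set S := \sum_(l < k | E j l) a l j.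
have -> : \sum_i (i == j)%:R * - S = - S.
  rewrite (bigD1 j) //= eqxx mul1r big1 ?addr0 // => i /negbTE ->.
  by rewrite mul0r.
by rewrite /F -big_mkcond /= addNr.
Qed.

Lemma comp_mx_det0 (T : comNzRingType) (k : nat) (E : rel 'I_k.+1)
   (E_irr : irreflexive E) (a : 'I_k.+1 -> 'I_k.+1 -> T) :
  \det (comp_mx E a) = 0.
Proof.
set A := comp_mx E a.
pose u : 'rV[T]_k.+1 := const_mx 1.
have uA : u *m A = 0.
  apply/matrixP => i j; rewrite mxE [RHS]mxE.
  transitivity (\sum_l comp_mx E a l j); last exact: comp_mx_colsum.
  by apply: eq_bigr => l _; rewrite mxE mul1r.
have := congr1 (fun M : 'M_(1, k.+1) => M 0 0) (mulmxA u A (\adj A)).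
by rewrite mul_mx_adj uA mul0mx mul_mx_scalar !mxE mulr1 => ->.
Qed.

Lemma lift0_max (k : nat) : lift ord0 (ord_max : 'I_k.+1) = ord_max.
Proof. by apply/val_inj; rewrite /= /bump. Qed.

Lemma lift_0max (k : nat) (j : 'I_k) :
  lift ord0 (lift ord_max j) = lift ord_max (lift ord0 j) :> 'I_k.+2.
Proof.
apply/val_inj => /=; rewrite /bump.
by rewrite (leqNgt k j) (ltn_ord j) /= ltnS leqNgt (ltn_ord j).
Qed.

Lemma minorE (R : Type) (k : nat) (M : 'M[R]_k.+1) (i0 j0 : 'I_k.+1) (i j : 'I_k) :
  (row' i0 (col' j0 M)) i j = M (lift i0 i) (lift j0 j).
Proof. by rewrite !mxE. Qed.

Lemma minor2E (R : Type) (k : nat) (M : 'M[R]_k.+2) (i0 j0 : 'I_k.+2)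
   (i1 j1 : 'I_k.+1) (i j : 'I_k) :
  row' i1 (col' j1 (row' i0 (col' j0 M))) i j = M (lift i0 (lift i1 i)) (lift j0 (lift j1 j)).
Proof. by rewrite !mxE. Qed.

Section Part1.
Variables (T : comNzRingType) (m : nat) (E : rel 'I_m.+2).
Hypothesis E_irr : irreflexive E.
Variable a : 'I_m.+3 -> 'I_m.+3 -> T.
Local Notation l := (lift ord_max).
Let A := comp_mx E (fun u v => a (l u) (l v)).
Let A' := comp_mx (add_leaf E ord0) a.
Let N := char_poly_mx A'.
Let N0 := char_poly_mx A.
Let a1n := a ord0 ord_max.
Let an1 := a ord_max ord0.

Lemma N_ll u v : N (l u) (l v) =
  N0 u v + (if (u == ord0) && (v == ord0) then an1%:P else 0).
Proof.
rewrite /N /N0 /A /A' !mxE (inj_eq lift_inj) addleaf_ll.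
case: eqP => [<-|neq]; last first.
  have -> : (u == ord0) && (v == ord0) = false.
    by apply/negP => /andP[/eqP eu /eqP ev]; apply: neq; rewrite eu ev.
  by rewrite addr0.
rewrite andbb (big_mkcond (fun l0 => add_leaf E ord0 (l u) l0)) /=.
rewrite (bigD1_ord ord_max) //= addleaf_lm.
rewrite (eq_bigr (fun w => if E u w then a (l w) (l u) else 0)); last first.
  by move=> w _; rewrite addleaf_ll.
rewrite -big_mkcond /=.
case: eqP => [->|_]; rewrite ?lift_max0 /an1 -/(add_leaf _ _) .
  by rewrite polyCN polyCD polyCN; ring.
by rewrite add0r addr0.
Qed.

Lemma N_ml v : N ord_max (l v) = - (if v == ord0 then an1%:P else 0).
Proof.
rewrite /N /A' !mxE (negbTE (neq_lift _ _)) addleaf_lm sub0r.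
by case: eqP => [->|]; rewrite ?lift_max0.
Qed.

Lemma N_lm u : N (l u) ord_max = - (if u == ord0 then a1n%:P else 0).
Proof.
rewrite /N /A' !mxE eq_sym (negbTE (neq_lift _ _)) addleaf_ml sub0r.
by case: eqP => [->|]; rewrite ?lift_max0.
Qed.

Lemma N_mm : N ord_max ord_max = 'X + a1n%:P.
Proof.
rewrite /N /A' !mxE eqxx mulr1n (big_mkcond (fun l0 => add_leaf E ord0 ord_max l0)) /=.
rewrite (bigD1_ord ord_max) //= addleaf_mm add0r.
rewrite (eq_bigr (fun w => if w == ord0 then a1n else 0)); last first.
  by move=> w _; rewrite addleaf_ml; case: eqP => [->|]; rewrite ?lift_max0.
rewrite -big_mkcond /= big_pred1_eq.
by rewrite polyCN opprK.
Qed.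

Let d := \det (row' ord0 (col' ord0 N0)).

Lemma ds_eq : \det (row' ord_max (col' ord0 N)) = ((-1)^+m.+2 * a1n)%:P * d.
Proof.
rewrite (expand_det_col _ ord_max) (bigD1 ord0) //= big1 ?addr0; last first.
  by move=> i /negbTE ni0; rewrite (@minorE _ _ N) lift0_max N_lm ni0 oppr0 mul0r.
rewrite (@minorE _ _ N) lift0_max N_lm eqxx /cofactor /=.
have -> : row' ord0 (col' ord_max (row' ord_max (col' ord0 N))) =
          row' ord0 (col' ord0 N0).
  apply/matrixP => i j; rewrite (@minor2E _ _ N) (@minorE _ _ N0) lift_0max N_ll.
  have -> : (lift ord0 i == ord0) = false by apply/negbTE; rewrite eq_sym neq_lift.
  by rewrite /= addr0.
by rewrite -/d polyCM rmorph_sign exprS add0n; ring.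
Qed.

Lemma N1_det : \det (row' ord_max (col' ord_max N)) = char_poly A + an1%:P * d.
Proof.
rewrite /char_poly -/N0 (expand_det_row _ ord0) [in RHS](expand_det_row _ ord0).
have cofE j : cofactor (row' ord_max (col' ord_max N)) ord0 j = cofactor N0 ord0 j.
  rewrite /cofactor; congr (_ * \det _); apply/matrixP => i i'.
  rewrite (@minor2E _ _ N) (@minorE _ _ N0) N_ll.
  have -> : (lift ord0 i == ord0) = false by apply/negbTE; rewrite eq_sym neq_lift.
  by rewrite /= addr0.
rewrite (eq_bigr (fun j => (N0 ord0 j + (if j == ord0 then an1%:P else 0)) *
   cofactor N0 ord0 j)); last by move=> j _; rewrite cofE (@minorE _ _ N) N_ll eqxx.
rewrite (eq_bigr (fun j => N0 ord0 j * cofactor N0 ord0 j +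
   (if j == ord0 then an1%:P * cofactor N0 ord0 j else 0))); last first.
  by move=> j _; rewrite mulrDl; case: eqP => // _; rewrite mul0r.
rewrite big_split /= -big_mkcond big_pred1_eq /cofactor /= expr0 mul1r.
by [].
Qed.

Lemma cs_eq : char_poly A' = ('X + a1n%:P) * char_poly A + an1%:P * ('X * d).
Proof.
rewrite /char_poly -/N (expand_det_row _ ord_max) (bigD1_ord ord_max) //= N_mm.
rewrite (bigD1 ord0) //= big1 ?addr0; last first.
  by move=> j /negbTE nj0; rewrite N_ml nj0 oppr0 mul0r.
rewrite N_ml eqxx /cofactor lift_max0 ds_eq N1_det -/(char_poly A) /=.
have s2 : (-1)^+m.+2 * (-1)^+m.+2 = 1 :> {poly T}.
  by rewrite -exprD addnn -signr_odd odd_double.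
rewrite addnn -signr_odd odd_double expr0 mul1r addn0 polyCM rmorph_sign.
set s := (-1)^+m.+2 in s2 *.
rewrite [s * (_ * _)]mulrA [s * (s * _)]mulrA s2 mul1r.
ring.
Qed.

Lemma c0_eq : (char_poly A)`_0 = 0.
Proof. by rewrite char_poly_det comp_mx_det0 ?mulr0. Qed.

Lemma d_char : d = char_poly (row' ord0 (col' ord0 A)).
Proof.
rewrite /d /char_poly; congr (\det _); apply/matrixP => i j.
rewrite (@minorE _ _ N0) /N0 /char_poly_mx !mxE (inj_eq lift_inj).
by [].
Qed.
End Part1.

Lemma part1 (m : nat) (E : rel 'I_m.+2)
    (E_irr : irreflexive E) :
  (forall (T : comNzRingType) (a : 'I_m.+3 -> 'I_m.+3 -> T),
    let A := comp_mx E (fun u v => a (lift ord_max u) (lift ord_max v)) in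
    let A' := comp_mx (add_leaf E ord0) a in
    let c := char_poly A in
    let d := \det (row' ord0 (col' ord0 (char_poly_mx A))) in
    let cs := char_poly A' in
    let ds := \det (row' ord_max (col' ord0 (char_poly_mx A'))) in
    let a1n := a ord0 ord_max in
    let an1 := a ord_max ord0 in
    [/\ (forall i, (i <= m.+1)%N -> ds`_i = (-1) ^+ m.+2 * a1n * d`_i),
        (forall i, (1 <= i <= m.+2)%N ->
           cs`_i = c`_i.-1 + a1n * c`_i + an1 * d`_i.-1)
      & cs`_0 = 0 /\ c`_0 = 0]).
Proof.
move=> T a A A' c d cs ds a1n an1.
have c0 : c`_0 = 0 by exact: (@c0_eq T m E E_irr a).
move: (c0); rewrite /c /A => c0'.
split.
- by move=> i _; rewrite /ds (@ds_eq T m E a) coefCM.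
- move=> i /andP[i1 _]; rewrite /cs (@cs_eq T m E a) coefD mulrDl coefD coefXM coefCM coefCM coefXM.
  by case: i i1.
  split => //; rewrite /cs (@cs_eq T m E a) coefD mulrDl coefD coefXM coefCM coefCM coefXM /=.
  by rewrite add0r mulr0 addr0 -/(char_poly _) c0' mulr0.
Qed.

Definition dv (R : comNzRingType) (n : nat) (x z : 'I_n -> R) (e : 'I_n) : {poly R} :=
  (x e)%:P + (z e)%:P * 'X.
Arguments dv {R n}.
Definition ev (R : comNzRingType) (n : nat) (x z : 'I_n -> R) (p : {mpoly R[n]}) : {poly R} :=
  mmap (@polyC R) (dv x z) p.
Arguments ev {R n}.
Definition Dd (R : comNzRingType) (n : nat) (x z : 'I_n -> R) (p : {mpoly R[n]}) : R :=
  \sum_e z e * (mderiv e p).@[x].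

Arguments Dd {R n}.

Section Dual.
Variables (R : comNzRingType) (n : nat) (x z : 'I_n -> R).

Lemma evD p q : ev x z (p + q) = ev x z p + ev x z q.
Proof. exact: raddfD. Qed.
Lemma evM p q : ev x z (p * q) = ev x z p * ev x z q.
Proof. exact: rmorphM. Qed.
Lemma evZ c p : ev x z (c *: p) = c%:P * ev x z p.
Proof. exact: mmapZ. Qed.
Lemma evXi i : ev x z 'X_i = dv x z i.
Proof. by rewrite /ev mmapX mmap1U. Qed.
Lemma evC c : ev x z c%:MP = c%:P.
Proof. exact: mmapC. Qed.

Lemma ev_coef0 p : (ev x z p)`_0 = p.@[x].
Proof.
elim/mpolyind: p => [|c m p _ _ ih]; first by rewrite /ev mmap0 meval0 coef0.
rewrite evD coefD ih mevalD mevalZ evZ coefCM /ev mmapX mevalX; congr (c * _ + _).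
rewrite /mmap1 -horner_coef0 horner_prod; apply: eq_bigr => i _.
by rewrite horner_exp /dv hornerD hornerC hornerM hornerX mulr0 addr0.
Qed.

Lemma deriv_ext (L1 L2 : {mpoly R[n]} -> R) :
  (forall p q, L1 (p + q) = L1 p + L1 q) -> (forall c p, L1 (c *: p) = c * L1 p) ->
  (forall p q, L1 (p * q) = p.@[x] * L1 q + q.@[x] * L1 p) ->
  (forall p q, L2 (p + q) = L2 p + L2 q) -> (forall c p, L2 (c *: p) = c * L2 p) ->
  (forall p q, L2 (p * q) = p.@[x] * L2 q + q.@[x] * L2 p) ->
  (forall i, L1 'X_i = L2 'X_i) -> forall p, L1 p = L2 p.
Proof.
move=> D1 Z1 M1 D2 Z2 M2 HX.
have L0 (L : {mpoly R[n]} -> R) : (forall p q, L (p + q) = L p + L q) -> L 0 = 0.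
  by move=> D; apply/(@addrI _ (L 0)); rewrite -D !addr0.
have L1_ (L : {mpoly R[n]} -> R) :
   (forall p q, L (p * q) = p.@[x] * L q + q.@[x] * L p) -> L 1 = 0.
  move=> M; apply/(@addrI _ (L 1)); rewrite addr0.
  by rewrite -{3}[1](mulr1 (1 : {mpoly R[n]})) M meval1 !mul1r.
elim/mpolyind => [|c m p _ _ ih]; first by rewrite (L0 _ D1) (L0 _ D2).
rewrite D1 D2 Z1 Z2 ih; congr (c * _ + _).
rewrite mpolyXE_id; apply: (big_ind (fun q => L1 q = L2 q)).
- by rewrite (L1_ _ M1) (L1_ _ M2).
- by move=> a b ha hb; rewrite M1 M2 ha hb.
move=> i _; elim: (m i) => [|k ihk]; first by rewrite expr0 (L1_ _ M1) (L1_ _ M2).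
by rewrite exprS M1 M2 ihk HX.
Qed.

Lemma Dual p : (ev x z p)`_1 = Dd x z p.
Proof.
apply: (@deriv_ext (fun p => (ev x z p)`_1) (Dd x z)) => {p}.
- by move=> p q; rewrite evD coefD.
- by move=> c p; rewrite evZ coefCM.
- move=> p q; rewrite evM coefM big_ord_recr big_ord_recr big_ord0 /= add0r.
  by rewrite !ev_coef0 /= subn0 [_ * q.@[x]]mulrC.
- move=> p q; rewrite /Dd -big_split /=; apply: eq_bigr => e _.
  by rewrite mderivD mevalD mulrDr.
- move=> c p; rewrite /Dd mulr_sumr; apply: eq_bigr => e _.
  by rewrite mderivZ mevalZ mulrCA.
- move=> p q; rewrite /Dd !mulr_sumr -big_split /=; apply: eq_bigr => e _.
  rewrite mderivM mevalD !mevalM; ring.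
- move=> i; rewrite evXi /dv coefD coefC coefCM coefX /= add0r mulr1.
  rewrite /Dd (bigD1 i) //= big1 ?addr0.
    by rewrite mderivX mnm1E eqxx mulr1n scale1r mevalX big1 ?mulr1 // => j _; rewrite mnmBE mnm1E; case: eqP => _; rewrite ?subnn expr0.
  move=> j /negbTE nj; rewrite mderivX mnm1E eq_sym nj /= scale0r meval0 mulr0.
  by [].
Qed.
End Dual.

Lemma jac_mulE (R : realFieldType) k (E : rel 'I_k) In Out x (Z : 'cV_(npar E)) r :
  (@jacobian R k E In Out x *m Z) r 0 =
  (ev x (fun e => Z e 0) ((io_coefs R E In Out)`_r))`_1.
Proof.
rewrite !mxE Dual /Dd; apply: eq_bigr => e _; by rewrite mxE mulrC.
Qed.

Lemma jac_ker (R : realFieldType) k (E : rel 'I_k) In Out x (Z : 'cV_(npar E)) :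
  (@jacobian R k E In Out x *m Z == 0) =
  all (fun p => (ev x (fun e => Z e 0) p)`_1 == 0) (io_coefs R E In Out).
Proof.
apply/eqP/allP.
  move=> h p /(nthP 0) [r hr <-].
  by move/matrixP: h => /(_ (Ordinal hr) 0); rewrite jac_mulE mxE => ->.
move=> h; apply/matrixP => r j; rewrite ord1 jac_mulE mxE; apply/eqP/h.
exact/mem_nth/ltn_ord.
Qed.

Lemma io_coefs1 (R : comNzRingType) k (E : rel 'I_k) (i j : 'I_k) :
  io_coefs R E [set j] [set i] =
  [seq p <- pcoefs (\det (char_poly_mx (comp_mx E (@par R k E)))) ++
     pcoefs ((-1) ^+ (i + j) *
        \det (row' j (col' i (char_poly_mx (comp_mx E (@par R k E)))))) |
   ~~ mconstant p].
Proof. by rewrite /io_coefs !enum_set1 /= !cats0. Qed.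

Lemma all_pcoefs (T : nzRingType) (P : pred T) (A : {poly T}) :
  P 0 -> all P (pcoefs A) = [forall i : 'I_(size A), P A`_i].
Proof.
move=> P0; apply/allP/forallP.
  by move=> h i; apply: h; apply/mapP; exists (val i) => //; rewrite mem_iota /= add0n.
by move=> h p /mapP [i]; rewrite mem_iota add0n => /= hi ->; apply: (h (Ordinal hi)).
Qed.

Lemma all_pcoefsP (T : nzRingType) (P : pred T) (A : {poly T}) :
  P 0 -> all P (pcoefs A) <-> forall i, P A`_i.
Proof.
move=> P0; rewrite all_pcoefs //; split.
  move/forallP => h i; case: (ltnP i (size A)) => hi; first exact: (h (Ordinal hi)).
  by rewrite nth_default.
by move=> h; apply/forallP => i.
Qed.

Lemma ev_const (R : comNzRingType) n (x z : 'I_n -> R) p :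
  mconstant p -> (ev x z p)`_1 = 0.
Proof. by move/eqP => ->; rewrite evC coefC. Qed.

Lemma io_ker (R : realFieldType) k (E : rel 'I_k) (i j : 'I_k) x
    (Z : 'cV_(npar E)) :
  let M := char_poly_mx (comp_mx E (@par R k E)) in
  let zf := fun e => Z e 0 in
  (@jacobian R k E [set j] [set i] x *m Z == 0) <->
  (forall l, (ev x zf ((\det M)`_l))`_1 = 0) /\
  (forall l, (ev x zf (((-1) ^+ (i + j) * \det (row' j (col' i M)))`_l))`_1 = 0).
Proof.
move=> M zf; rewrite jac_ker io_coefs1 all_filter all_cat.
set P := fun p => (ev x zf p)`_1 == 0.
have EP : [pred p | ~~ mconstant p ==> ((ev x zf p)`_1 == 0)] =1 P.
  by move=> p /=; rewrite /P; case: (boolP (mconstant p)) => //= /(@ev_const _ _ x zf) ->; rewrite eqxx.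
rewrite !(eq_all EP).
have P0 : P 0 by rewrite /P /ev mmap0 coef0.
split.
  case/andP => h1 h2.
  have g1 := iffLR (@all_pcoefsP _ P _ P0) h1.
  have g2 := iffLR (@all_pcoefsP _ P _ P0) h2.
  by split => l; apply/eqP; [apply: g1|apply: g2].
case=> h1 h2; apply/andP; split; apply: (iffRL (@all_pcoefsP _ P _ P0)) => l; apply/eqP; [apply: h1|apply: h2].
Qed.

Lemma sub_ker (F : fieldType) m1 m2 n (A : 'M[F]_(m1, n)) (B : 'M[F]_(m2, n)) :
  (forall Z : 'cV_n, B *m Z = 0 -> A *m Z = 0) -> (A <= B)%MS.
Proof.
move=> h; rewrite submxE; have BC := mulmx_coker B.
move: (cokermx B) BC => C BC; apply/eqP/matrixP => i j.
have := h (col j C); rewrite !colE !mulmxA BC mul0mx => /(_ erefl).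
move/matrixP => /(_ i 0); rewrite -colE !mxE => ->.
by [].
Qed.

Definition selmx (R : nzRingType) n p (f : 'I_n -> 'I_p) : 'M[R]_(n, p) :=
  \matrix_(i, e) (f i == e)%:R.
Arguments selmx {R n p}.

Lemma selmx_mul (R : nzRingType) n p q (f : 'I_n -> 'I_p) (Z : 'M[R]_(p, q)) i j :
  (selmx f *m Z) i j = Z (f i) j.
Proof.
rewrite mxE (bigD1 (f i)) //= mxE eqxx mul1r big1 ?addr0 // => e ne.
by rewrite mxE eq_sym (negbTE ne) mul0r.
Qed.

Lemma selmx_tr (R : nzRingType) n1 n2 p (f : 'I_n1 -> 'I_p) (g : 'I_n2 -> 'I_p) :
  selmx f *m (selmx g)^T = \matrix_(i, j) (f i == g j)%:R :> 'M[R]_(n1, n2).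
Proof.
apply/matrixP => i j; rewrite selmx_mul !mxE eq_sym.
by [].
Qed.

Lemma in_edges k (E : rel 'I_k) u v : ((u, v) \in edges E) = E u v.
Proof. by rewrite inE. Qed.

Lemma par_in (R : comNzRingType) k (E : rel 'I_k) x0 (h0 : x0 \in edges E) u v :
  E v u -> @par R k E u v = 'X_(enum_rank_in h0 (v, u)).
Proof.
move=> Evu; rewrite /par (big_pred1 (enum_rank_in h0 (v, u))) // => e /=.
apply/eqP/eqP => [<-|->]; first by rewrite enum_valK_in.
by rewrite enum_rankK_in // in_edges.
Qed.

Arguments par_in {R k E x0}.

Lemma par_out (R : comNzRingType) k (E : rel 'I_k) u v :
  ~~ E v u -> @par R k E u v = 0.
Proof.
move=> nE; rewrite /par big1 // => e /eqP he.
by move: (enum_valP e); rewrite he in_edges (negbTE nE).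
Qed.

Arguments par_out {R k E}.

Lemma map_comp_mx (S T : comNzRingType) (f : {rmorphism S -> T}) k (E : rel 'I_k) a :
  map_mx f (comp_mx E a) = comp_mx E (fun u v => f (a u v)).
Proof.
apply/matrixP => i j; rewrite !mxE; case: eqP => _; first by rewrite rmorphN rmorph_sum.
by case: (E j i); rewrite ?rmorph0.
Qed.

Lemma comp_mx_eq (T : comNzRingType) k (E : rel 'I_k) (a b : 'I_k -> 'I_k -> T) :
  (forall u v, a u v = b u v) -> comp_mx E a = comp_mx E b.
Proof.
move=> h; apply/matrixP => i j; rewrite !mxE; case: eqP => _.
  by congr (- _); apply: eq_bigr => l _; rewrite h.
by rewrite h.
Qed.

Lemma ev_sign (R : comNzRingType) n (x z : 'I_n -> R) (P : {poly {mpoly R[n]}}) k l :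
  (ev x z (((-1) ^+ k * P)`_l))`_1 = (-1) ^+ k * (ev x z (P`_l))`_1.
Proof.
have sg (U : pzRingType) (y : U) : (-1) ^+ k * y = if odd k then - y else y.
  by rewrite -signr_odd mulr_sign.
rewrite !sg; case: (odd k) => //.
by rewrite coefN /ev raddfN coefN.
Qed.

Lemma jac_eq (R : realFieldType) k (E : rel 'I_k) In Out (x1 x2 : 'I_(npar E) -> R) :
  x1 =1 x2 -> @jacobian R k E In Out x1 = @jacobian R k E In Out x2.
Proof. by move=> h; apply/matrixP => i j; rewrite !mxE (meval_eq _ h). Qed.

Lemma ev_charpoly (R : comNzRingType) n (x z : 'I_n -> R) k (A : 'M_k) l :
  ev x z ((char_poly A)`_l) = (char_poly (map_mx (ev x z) A))`_l.
Proof. by rewrite /ev -coef_map map_char_poly. Qed.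

Lemma ev_minor (R : comNzRingType) n (x z : 'I_n -> R) k (A : 'M_k) i j l :
  ev x z ((\det (row' i (col' j (char_poly_mx A))))`_l) =
  (\det (row' i (col' j (char_poly_mx (map_mx (ev x z) A)))))`_l.
Proof.
by rewrite /ev -coef_map -det_map_mx map_row' map_col' map_char_poly_mx.
Qed.

Lemma ev_comp_mx (R : comNzRingType) n (x z : 'I_n -> R) k (E : rel 'I_k) (a : 'I_k -> 'I_k -> {mpoly R[n]}) :
  map_mx (ev x z) (comp_mx E a) = comp_mx E (fun u v => ev x z (a u v)).
Proof. by rewrite /ev map_comp_mx. Qed.

Section Leaf2.
Variables (m : nat) (E : rel 'I_m.+2).
Local Notation E' := (add_leaf E ord0).

Lemma h0 : ((ord0 : 'I_m.+3), (ord_max : 'I_m.+3)) \in edges E'.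
Proof.
rewrite in_edges.
have -> : (ord0 : 'I_m.+3) = lift ord_max (ord0 : 'I_m.+2) by apply/val_inj.
by rewrite /add_leaf liftK unlift_none.
Qed.

Lemma h0' : ((ord_max : 'I_m.+3), (ord0 : 'I_m.+3)) \in edges E'.
Proof.
rewrite in_edges.
have -> : (ord0 : 'I_m.+3) = lift ord_max (ord0 : 'I_m.+2) by apply/val_inj.
by rewrite /add_leaf liftK unlift_none.
Qed.

Definition e1 : 'I_(npar E') := enum_rank_in h0 (ord0, ord_max).
Definition e2 : 'I_(npar E') := enum_rank_in h0 (ord_max, ord0).
Definition sig (e : 'I_(npar E)) : 'I_(npar E') :=
  enum_rank_in h0 (lift ord_max (enum_val e).1, lift ord_max (enum_val e).2).

Lemma val_e1 : enum_val e1 = (ord0, ord_max).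
Proof. exact: (enum_rankK_in h0 h0). Qed.
Lemma val_e2 : enum_val e2 = (ord_max, ord0).
Proof. exact: (enum_rankK_in h0 h0'). Qed.

Lemma val_sig e : enum_val (sig e) =
   (lift ord_max (enum_val e).1, lift ord_max (enum_val e).2).
Proof.
apply: (enum_rankK_in h0); rewrite in_edges /add_leaf !liftK -in_edges.
by rewrite -surjective_pairing enum_valP.
Qed.

Lemma sig_inj : injective sig.
Proof.
move=> e f /(congr1 enum_val); rewrite !val_sig => h.
have h1 := congr1 fst h; have h2 := congr1 snd h.
apply: enum_val_inj; rewrite [enum_val e]surjective_pairing [enum_val f]surjective_pairing.
by rewrite (lift_inj h1) (lift_inj h2).
Qed.

Lemma sig_ne1 e : sig e != e1.
Proof.
apply/eqP => /(congr1 enum_val); rewrite val_sig val_e1 => /(congr1 (fun p => val p.2)).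
rewrite /= /bump leqNgt (ltn_ord (enum_val e).2) add0n => h.
have := ltn_ord (enum_val e).2; by rewrite h ltnn.
Qed.

Lemma sig_ne2 e : sig e != e2.
Proof.
apply/eqP => /(congr1 enum_val); rewrite val_sig val_e2 => /(congr1 (fun p => val p.1)).
rewrite /= /bump leqNgt (ltn_ord (enum_val e).1) add0n => h.
have := ltn_ord (enum_val e).1; by rewrite h ltnn.
Qed.

Lemma e1_ne_e2 : e1 != e2.
Proof.
by apply/eqP => /(congr1 enum_val); rewrite val_e1 val_e2 => /(congr1 (fun p => val p.1)).
Qed.

Variable R : comNzRingType.

Lemma ev_par (x z : 'I_(npar E') -> R) u v :
  ev x z (@par R _ E' (lift ord_max u) (lift ord_max v)) =
  ev (fun e => x (sig e)) (fun e => z (sig e)) (@par R _ E u v).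
Proof.
case: (boolP (E v u)) => Evu.
  have hv : (v, u) \in edges E by rewrite in_edges.
  rewrite (par_in h0) ?addleaf_ll // (par_in hv u v Evu) !evXi /dv.
  suff -> : sig (enum_rank_in hv (v, u)) = enum_rank_in h0 (lift ord_max v, lift ord_max u) by [].
  by rewrite /sig enum_rankK_in.
by rewrite !par_out ?addleaf_ll // /ev !mmap0.
Qed.

Lemma ev_a1n (x z : 'I_(npar E') -> R) :
  ev x z (@par R _ E' ord0 ord_max) = dv x z e2.
Proof. by rewrite (par_in h0) ?evXi //; move: h0'; rewrite in_edges. Qed.

Lemma ev_an1 (x z : 'I_(npar E') -> R) :
  ev x z (@par R _ E' ord_max ord0) = dv x z e1.
Proof. by rewrite (par_in h0) ?evXi //; move: h0; rewrite in_edges. Qed.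
End Leaf2.

Lemma kerG (R : realFieldType) k (E : rel 'I_k) (i j : 'I_k) x (Z : 'cV_(npar E)) :
  let aT := fun u v => ev x (fun e => Z e 0) (@par R k E u v) in
  (@jacobian R k E [set j] [set i] x *m Z == 0) <->
  forall l, ((char_poly (comp_mx E aT))`_l)`_1 = 0 /\
    ((\det (row' j (col' i (char_poly_mx (comp_mx E aT)))))`_l)`_1 = 0.
Proof.
move=> aT; rewrite io_ker.
have e1 l : ev x (fun e => Z e 0)
    ((\det (char_poly_mx (comp_mx E (@par R k E))))`_l) = (char_poly (comp_mx E aT))`_l.
  by rewrite -/(char_poly _) ev_charpoly ev_comp_mx.
have e2 l : (ev x (fun e => Z e 0) (((-1) ^+ (i + j) *
        \det (row' j (col' i (char_poly_mx (comp_mx E (@par R k E))))))`_l))`_1 =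
    (-1) ^+ (i + j) * ((\det (row' j (col' i (char_poly_mx (comp_mx E aT)))))`_l)`_1.
  by rewrite ev_sign ev_minor ev_comp_mx.
have sg (r : R) : ((-1) ^+ (i + j) * r == 0) = (r == 0).
  by rewrite mulf_eq0 signr_eq0.
split.
  case=> h1 h2 l; split; first by rewrite -e1 h1.
  by apply/eqP; rewrite -sg -e2 h2.
move=> h; split=> l; first by rewrite e1 (h l).1.
by rewrite e2 (h l).2 mulr0.
Qed.

Arguments sig {m E}.
Arguments e1 {m E}.
Arguments e2 {m E}.

Lemma ev_ext (R : comNzRingType) n (x1 x2 z1 z2 : 'I_n -> R) p :
  x1 =1 x2 -> z1 =1 z2 -> ev x1 z1 p = ev x2 z2 p.
Proof.
move=> hx hz; rewrite /ev /mmap; apply: eq_bigr => mm _; congr (_ * _).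
by rewrite /mmap1; apply: eq_bigr => i _; rewrite /dv hx hz.
Qed.

Lemma minor_char (T : comNzRingType) k (A : 'M[T]_k.+1) :
  \det (row' ord0 (col' ord0 (char_poly_mx A))) = char_poly (row' ord0 (col' ord0 A)).
Proof.
rewrite /char_poly; congr (\det _); apply/matrixP => i j.
by rewrite (@minorE _ _ (char_poly_mx A)) !mxE (inj_eq lift_inj).
Qed.

Lemma char_top (T : comNzRingType) k (A : 'M[T]_k) : (char_poly A)`_k = 1.
Proof.
have := char_poly_monic A; rewrite monicE lead_coefE size_char_poly /=.
by move/eqP.
Qed.

Section Ker2.
Variables (m : nat) (E : rel 'I_m.+2) (R : realFieldType).
Local Notation E' := (add_leaf E ord0).
Variables (x' : 'I_(npar E') -> R) (Z : 'cV[R]_(npar E')).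
Let zf e := Z e 0.
Let aT u v := ev x' zf (@par R _ E' u v).
Let AT := comp_mx E (fun u v => aT (lift ord_max u) (lift ord_max v)).
Let y e := x' (sig e).
Let Z' := selmx (@sig m E) *m Z.
Let cT := char_poly AT.
Let dT := \det (row' ord0 (col' ord0 (char_poly_mx AT))).
Let csT := char_poly (comp_mx E' aT).
Let dsT := \det (row' ord_max (col' ord0 (char_poly_mx (comp_mx E' aT)))).

Lemma AT_eq : AT = comp_mx E (fun u v => ev y (fun e => Z' e 0) (@par R _ E u v)).
Proof.
apply: comp_mx_eq => u v; rewrite /aT ev_par; apply: ev_ext => // e.
by rewrite /Z' selmx_mul.
Qed.

Lemma kerM_T : (@jacobian R _ E [set ord0] [set ord0] y *m Z' == 0) <->
  forall l, (cT`_l)`_1 = 0 /\ (dT`_l)`_1 = 0.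
Proof. by rewrite kerG /cT /dT AT_eq. Qed.

Lemma kerM'_T : (@jacobian R _ E' [set ord_max] [set ord0] x' *m Z == 0) <->
  forall l, (csT`_l)`_1 = 0 /\ (dsT`_l)`_1 = 0.
Proof. exact: kerG. Qed.

Lemma cs_coef l : csT`_l = (if l == 0%N then 0 else cT`_l.-1) + dv x' zf e2 * cT`_l +
   dv x' zf e1 * (if l == 0%N then 0 else dT`_l.-1).
Proof.
rewrite /csT (@cs_eq _ m E aT) coefD mulrDl coefD coefXM coefCM coefCM coefXM.
by rewrite /aT ev_a1n ev_an1.
Qed.

Lemma ds_coef l : dsT`_l = (-1) ^+ m.+2 * dv x' zf e2 * dT`_l.
Proof. by rewrite /dsT (@ds_eq _ m E aT) coefCM /aT ev_a1n. Qed.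

Lemma dT_top : dT`_m.+1 = 1.
Proof. by rewrite /dT minor_char char_top. Qed.

Lemma cT_size : size cT = m.+3.
Proof. exact: size_char_poly. Qed.

Lemma dT_size : size dT = m.+2.
Proof. by rewrite /dT minor_char size_char_poly. Qed.

Lemma dT_coef0 l : (dT`_l)`_0 =
  ((\det (row' ord0 (col' ord0 (char_poly_mx (comp_mx E (@par R _ E))))))`_l).@[y].
Proof.
by rewrite /dT AT_eq -ev_comp_mx -ev_minor ev_coef0.
Qed.
End Ker2.

Section Rank.
Variables (m : nat) (E : rel 'I_m.+2) (R : realFieldType).
Local Notation E' := (add_leaf E ord0).
Local Notation JM := (@jacobian R _ E [set ord0] [set ord0]).
Local Notation JM' := (@jacobian R _ E' [set ord_max] [set ord0]).

Definition eidx (i : 'I_2) : 'I_(npar E') := if i == ord0 then e1 else e2.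
Definition Pm : 'M[R]_(npar E + 2, npar E') := col_mx (selmx (@sig m E)) (selmx eidx).
Definition Bm x : 'M[R]_(_, npar E') := block_mx (JM x) 0 0 (1%:M : 'M_2) *m Pm.

Lemma ord2 (i : 'I_2) : i = ord0 \/ i = ord_max.
Proof. by case: i => [[|[|//]] hi]; [left|right]; apply/val_inj. Qed.

Lemma Pm_free : row_free Pm.
Proof.
apply/row_freeP; exists Pm^T.
rewrite /Pm tr_col_mx mul_col_row !selmx_tr scalar_mx_block.
congr block_mx; apply/matrixP => i j; rewrite !mxE.
- by rewrite (inj_eq (@sig_inj m E)).
- by rewrite /eidx; case: (j == ord0); rewrite ?(negbTE (@sig_ne1 m E _)) ?(negbTE (@sig_ne2 m E _)).
- by rewrite /eidx eq_sym; case: (i == ord0); rewrite ?(negbTE (@sig_ne1 m E _)) ?(negbTE (@sig_ne2 m E _)).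
- have ne := @e1_ne_e2 m E.
  rewrite /eidx; case: (ord2 i) => ->; case: (ord2 j) => -> /=; rewrite ?eqxx //.
    by rewrite (negbTE ne).
  by rewrite eq_sym (negbTE ne).
Qed.

Lemma rank_Bm x : \rank (Bm x) = (\rank (JM x) + 2)%N.
Proof. by rewrite /Bm mxrankMfree ?Pm_free // rank_diag_block_mx mxrank1. Qed.

Lemma Bm_mul x (Z : 'cV_(npar E')) :
  Bm x *m Z = col_mx (JM x *m (selmx (@sig m E) *m Z)) (selmx eidx *m Z).
Proof. by rewrite /Bm -mulmxA /Pm [col_mx (selmx _) _ *m Z]mul_col_mx mul_block_col !mul0mx addr0 add0r mul1mx. Qed.

Lemma eidx0 (Z : 'cV[R]_(npar E')) :
  (selmx eidx *m Z == 0) = (Z e1 0 == 0) && (Z e2 0 == 0).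
Proof.
apply/eqP/andP.
  move/matrixP => h; split; apply/eqP.
    by have := h ord0 0; rewrite selmx_mul mxE.
  by have := h ord_max 0; rewrite selmx_mul mxE.
case=> /eqP h1 /eqP h2; apply/matrixP => i j; rewrite selmx_mul mxE ord1 /eidx.
by case: eqP.
Qed.
End Rank.

Lemma coef_sign (R : comNzRingType) k (P : {poly R}) l :
  ((-1) ^+ k * P)`_l = (-1) ^+ k * P`_l.
Proof.
have sg (U : pzRingType) (y : U) : (-1) ^+ k * y = if odd k then - y else y.
  by rewrite -signr_odd mulr_sign.
by rewrite !sg; case: (odd k) => //; rewrite coefN.
Qed.

Section Bounds.
Variables (m : nat) (E : rel 'I_m.+2) (R : realFieldType).
Local Notation E' := (add_leaf E ord0).
Local Notation JM := (@jacobian R _ E [set ord0] [set ord0]).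
Local Notation JM' := (@jacobian R _ E' [set ord_max] [set ord0]).

Lemma upper (x' : 'I_(npar E') -> R) :
  (\rank (JM' x') <= \rank (JM (fun e => x' (sig e))) + 2)%N.
Proof.
rewrite -rank_Bm; apply: mxrankS; apply: sub_ker => Z.
rewrite Bm_mul => /eqP; rewrite col_mx_eq0 eidx0 => /andP[/eqP h1 /andP[/eqP z1 /eqP z2]].
have hc := iffLR (@kerM_T m E R x' Z) (introT eqP h1).
apply/eqP; apply/(iffRL (@kerM'_T m E R x' Z)) => l.
rewrite cs_coef ds_coef /dv z1 z2 !polyC0 !mul0r !addr0.
split.
  rewrite !coefD !coefCM; case: (l == 0%N); rewrite ?coef0 ?(hc _).1 ?(hc _).2 ?mulr0 ?addr0 //.
by rewrite -mulrA coef_sign coefCM (hc _).2 !mulr0.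
Qed.
End Bounds.

Lemma exists_t (R : realFieldType) (D : {poly R}) :
  D != 0 -> exists t : R, t != 0 /\ D.[- t] != 0.
Proof.
move=> D0.
pose rs := [seq - (i.+1)%:R | i <- iota 0 (size D)] : seq R.
case: (boolP (all (root D) rs)) => [hall | ].
  have urs : uniq rs.
    rewrite map_inj_uniq ?iota_uniq // => i j /oppr_inj /eqP.
    by rewrite eqr_nat eqSS => /eqP.
  by have := max_poly_roots D0 hall urs; rewrite size_map size_iota ltnn.
move/allPn => [r /mapP [i _ ->]] nroot; exists (i.+1)%:R; split.
  by rewrite pnatr_eq0.
exact: nroot.
Qed.

Section Lower.
Variables (m : nat) (E : rel 'I_m.+2) (R : realFieldType).
Local Notation E' := (add_leaf E ord0).
Local Notation JM := (@jacobian R _ E [set ord0] [set ord0]).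
Local Notation JM' := (@jacobian R _ E' [set ord_max] [set ord0]).

Lemma lower (x : 'I_(npar E) -> R) :
  exists x' : 'I_(npar E') -> R, (\rank (JM x) + 2 <= \rank (JM' x'))%N.
Proof.
pose dM := \det (row' ord0 (col' ord0 (char_poly_mx (comp_mx E (@par R _ E))))).
pose D := map_poly (meval x) dM.
have DE l : D`_l = (dM`_l).@[x] by rewrite coef_map_id0 // meval0.
have D0 : D != 0.
  apply/eqP => h; have := DE m.+1; rewrite h coef0 /dM minor_char char_top meval1.
  by move/esym/eqP; rewrite oner_eq0.
have [t [t0 Dt]] := @exists_t R D D0.
pose x' (e' : 'I_(npar E')) :=
  if [pick e | @sig m E e == e'] is Some e then x e else if e' == e2 then t else 0.
have x'sig e : x' (sig e) = x e.
  rewrite /x'; case: pickP => [e0 /eqP /(@sig_inj m E) -> // | /(_ e)].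
  by rewrite eqxx.
have x'e2 : x' e2 = t.
  rewrite /x'; case: pickP => [e0 /eqP h | _]; last by rewrite eqxx.
  by have := @sig_ne2 m E e0; rewrite h eqxx.
exists x'; rewrite -rank_Bm; apply: mxrankS; apply: sub_ker => Z /eqP hZ.
have hc := iffLR (@kerM'_T m E R x' Z) hZ.
pose zf := fun e => Z e 0.
pose AT := comp_mx E (fun u v => ev x' (fun e => Z e 0) (@par R _ E' (lift ord_max u) (lift ord_max v))).
pose cT := char_poly AT.
pose dT := \det (row' ord0 (col' ord0 (char_poly_mx AT))).
have z2 : Z e2 0 = 0.
  have := (hc m.+1).2; rewrite ds_coef dT_top mulr1 coef_sign /dv coefD coefC coefCM coefX.
  rewrite /= mulr1 add0r => /eqP; rewrite mulf_eq0 signr_eq0 /=.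
  by move/eqP.
have dv2 : dv x' zf e2 = t%:P by rewrite /dv /zf z2 polyC0 mul0r addr0 x'e2.
have d1 l : (dT`_l)`_1 = 0.
  have := (hc l).2; rewrite ds_coef dv2 -mulrA coef_sign coefCM => /eqP.
  by rewrite mulf_eq0 signr_eq0 mulf_eq0 (negbTE t0) /= => /eqP.
pose Ce := \poly_(i < m.+3) (cT`_i)`_1.
pose Dz := \poly_(i < m.+2) (dT`_i)`_0.
have CeE i : Ce`_i = (cT`_i)`_1.
  rewrite coef_poly; case: ltnP => // h.
  have -> : cT`_i = 0 by rewrite nth_default // size_char_poly.
  by rewrite coef0.
have DzE i : Dz`_i = (dT`_i)`_0.
  rewrite coef_poly; case: ltnP => // h.
  have -> : dT`_i = 0 by rewrite nth_default // /dT minor_char size_char_poly.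
  by rewrite coef0.
have DzD : Dz = D.
  apply/polyP => i; rewrite DzE DE dT_coef0; apply: meval_eq => e.
  exact: x'sig.
have ident : ('X + t%:P) * Ce + (Z e1 0)%:P * ('X * Dz) = 0.
  apply/polyP => l; rewrite coef0; have H := (hc l).1; rewrite cs_coef dv2 in H.
  rewrite -/AT -/cT -/dT in H.
  rewrite coefD mulrDl coefD coefXM coefCM coefCM coefXM.
  case: l H => [|l] H /=.
    rewrite CeE mulr0 !addr0 add0r; move: H; rewrite add0r mulr0 addr0 coefCM.
    by [].
  rewrite !CeE DzE; move: H; rewrite /dv mulrDl -mulrA !coefD !coefCM coefXM /= d1 mulr0 add0r.
  by [].
have z1 : Z e1 0 = 0.
  have := congr1 (fun p => p.[- t]) ident.
  rewrite !hornerE /= addNr mul0r add0r.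
  move/eqP; rewrite !mulf_eq0 oppr_eq0 (negbTE t0) DzD (negbTE Dt) /= !orbF.
  by move/eqP.
have Ce0 : Ce = 0.
  move: ident; rewrite z1 polyC0 mul0r addr0 => /eqP; rewrite mulf_eq0.
  by rewrite (negbTE (monic_neq0 (monicXaddC t))) /= => /eqP.
have hM : JM (fun e => x' (sig e)) *m (selmx sig *m Z) == 0.
  apply/(iffRL (@kerM_T m E R x' Z)) => l; split; last exact: d1 l.
  by move: (CeE l); rewrite Ce0 coef0 => /esym.
rewrite Bm_mul (@jac_eq R _ E [set ord0] [set ord0] x (fun e => x' (sig e)) (fun e => esym (x'sig e))); apply/eqP.
rewrite col_mx_eq0 hM eidx0 z1 z2 eqxx.
by [].
Qed.
End Lower.

Lemma ex_max_rank (R : realFieldType) k (E : rel 'I_k) In Out :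
  exists r, generic_jac_rank R E In Out r.
Proof.
pose J := @jacobian R k E In Out.
suff H : forall d n, (exists x, \rank (J x) = n) -> (npar E - n <= d)%N ->
   exists r, generic_jac_rank R E In Out r.
  by apply: (H (npar E) (\rank (J (fun _ => 0)))) => //; [exists (fun _ => 0) | rewrite leq_subr].
elim=> [|d IH] n [x hx] hd.
  exists n; split; first by exists x.
  move=> y; have := rank_leq_col (J y); move: hd; rewrite leqn0 subn_eq0 => hd h.
  exact: leq_trans h hd.
case: (classic (forall y, (\rank (J y) <= n)%N)) => [hall|].
  by exists n; split; first exists x.
move/not_all_ex_not => [y hy]; apply: (IH (\rank (J y))); first by exists y.
have lt : (n < \rank (J y))%N by rewrite ltnNge; apply/negP.
have := rank_leq_col (J y); rewrite /J => hy2.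
move: hd; rewrite -/J; lia.
Qed.

Theorem proposition4p15 (m : nat) (E : rel 'I_m.+2)
    (E_irr : irreflexive E) (E_sc : forall u v, connect E u v) :
  (forall (T : comNzRingType) (a : 'I_m.+3 -> 'I_m.+3 -> T),
    let A := comp_mx E (fun u v => a (lift ord_max u) (lift ord_max v)) in
    let A' := comp_mx (add_leaf E ord0) a in
    let c := char_poly A in
    let d := \det (row' ord0 (col' ord0 (char_poly_mx A))) in
    let cs := char_poly A' in
    let ds := \det (row' ord_max (col' ord0 (char_poly_mx A'))) in
    let a1n := a ord0 ord_max in
    let an1 := a ord_max ord0 in
    [/\ (forall i, (i <= m.+1)%N -> ds`_i = (-1) ^+ m.+2 * a1n * d`_i),
        (forall i, (1 <= i <= m.+2)%N ->
           cs`_i = c`_i.-1 + a1n * c`_i + an1 * d`_i.-1)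
      & cs`_0 = 0 /\ c`_0 = 0]) /\
  (forall R : realFieldType,
    exists r, generic_jac_rank R E [set ord0] [set ord0] r /\
              generic_jac_rank R (add_leaf E ord0) [set ord_max] [set ord0]
                (r + 2)).
Proof.
split; first exact: part1.
move=> R; have [r [[x hx] hall]] := @ex_max_rank R _ E [set ord0] [set ord0].
exists r; split; first by split; [exists x|].
split.
  have [x' hx'] := lower m E R x; exists x'; apply/eqP; rewrite eqn_leq.
  rewrite -{2}hx hx' andbT.
  apply: leq_trans (upper m E R x') _; rewrite leq_add2r; exact: hall.
move=> x'; apply: leq_trans (upper m E R x') _; rewrite leq_add2r; exact: hall.
Qed.
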